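(* If $\lambda$ is a singular cardinal and $\clubsuit\square_\lambda$ holds, then $2^\lambda=\lambda^+$.
   Context: For a set of ordinals $A$: $\operatorname{acc}(A)=\{\alpha\in A:\sup(A\cap\alpha)=\alpha\}$; $\operatorname{otp}(A)$ is its order type; $A(i)$ is the unique $\beta\in A$ with $\operatorname{otp}(A\cap\beta)=i$. A $\square_\lambda$-sequence is $\langle C_\alpha:\alpha<\lambda^+\rangle$ such that for every limit $\alpha<\lambda^+$, $C_\alpha$ is a club in $\alpha$ of order type $\le\lambda$, and $\beta\in\operatorname{acc}(C_\alpha)$ implies $C_\beta=C_\alpha\cap\beta$. $\clubsuit\square_\lambda$ asserts the existence of a $\square_\lambda$-sequence $\langle C_\alpha\rangle$ such that for every sequence $\langle A_i:i<\lambda\rangle$ of unbounded subsets of $\lambda^+$, every limit $\theta<\lambda$ and every club $D\subseteq\lambda^+$, there is $\alpha<\lambda^+$ with $\operatorname{otp}(C_\alpha)=\theta$ such that for all $i<\theta$: $C_\alpha(i+1)\in A_i$, and $C_\alpha(i)<\beta<C_\alpha(i+1)$ for some $\beta\in D$. *)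

(* Defs.v *)
(* Ordinals below lambda^+ are modelled by a type K with a
   strict well-order R whose order type is lambda^+; lambda itself is an
   element [lam : K] and the ordinal alpha is identified with the initial
   segment {x | R x alpha}. *)
From Stdlib Require Import Classical.

Unset Implicit Arguments.

Section Ord.
Context {K : Type} (R : K -> K -> Prop).

Definition le (x y : K) : Prop := R x y \/ x = y.

Definition strict_wellorder : Prop :=
  (forall x, ~ R x x) /\
  (forall x y z, R x y -> R y z -> R x z) /\
  (forall x y, R x y \/ x = y \/ R y x) /\
  well_founded R.

Definition seg (a : K) : Type := { x : K | R x a }.

Definition injects (A B : Type) : Prop :=
  exists f : A -> B, forall a b, f a = f b -> a = b.

Definition is_limit (a : K) : Prop :=
  (exists x, R x a) /\ (forall x, R x a -> exists y, R x y /\ R y a).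

Definition is_cardinal (a : K) : Prop :=
  forall b, R b a -> ~ injects (seg a) (seg b).

Definition is_successor_cardinal_of (lam : K) : Prop :=
  (forall a, injects (seg a) (seg lam)) /\ ~ injects K (seg lam).

Definition singular_cardinal (lam : K) : Prop :=
  is_limit lam /\ is_cardinal lam /\
  exists mu, R mu lam /\
    exists f : seg mu -> seg lam,
      forall x, R x lam -> exists i, le x (proj1_sig (f i)).

Definition sup_below_eq (A : K -> Prop) (a : K) : Prop :=
  forall z, R z a -> exists y, A y /\ R y a /\ R z y.

Definition acc_pt (A : K -> Prop) (a : K) : Prop := A a /\ sup_below_eq A a.

Definition club_in (C : K -> Prop) (a : K) : Prop :=
  (forall x, C x -> R x a) /\
  (forall x, R x a -> exists y, C y /\ le x y) /\
  (forall g, R g a -> is_limit g -> sup_below_eq C g -> C g).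

Definition club (D : K -> Prop) : Prop :=
  (forall x, exists y, D y /\ le x y) /\
  (forall g, is_limit g -> sup_below_eq D g -> D g).

Definition unbounded (A : K -> Prop) : Prop :=
  forall x, exists y, A y /\ le x y.

Definition otp_le (A : K -> Prop) (lam : K) : Prop :=
  exists f : {x : K | A x} -> seg lam,
    forall a b, R (proj1_sig a) (proj1_sig b) ->
                R (proj1_sig (f a)) (proj1_sig (f b)).

(* e : theta -> A is the order isomorphism witnessing otp(A) = theta,
   so that e i = A(i) *)
Definition otp_iso (theta : K) (A : K -> Prop) (e : seg theta -> K) : Prop :=
  (forall i j : seg theta, R (proj1_sig i) (proj1_sig j) -> R (e i) (e j)) /\
  (forall i, A (e i)) /\
  (forall y, A y -> exists i, e i = y).

Definition square_seq (lam : K) (C : K -> K -> Prop) : Prop :=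
  forall a, is_limit a ->
    club_in (C a) a /\ otp_le (C a) lam /\
    (forall b, acc_pt (C a) b -> forall x, C b x <-> (C a x /\ R x b)).

(* clubsuit-square_lam; j is i+1 (the immediate successor of i, which is < theta
   since theta is a limit) *)
Definition clubsuit_square (lam : K) : Prop :=
  exists C : K -> K -> Prop, square_seq lam C /\
    forall A : K -> K -> Prop,
      (forall i, R i lam -> unbounded (A i)) ->
      forall theta, R theta lam -> is_limit theta ->
      forall D, club D ->
        exists a : K, exists e : seg theta -> K, otp_iso theta (C a) e /\
          forall i j : seg theta,
            R (proj1_sig i) (proj1_sig j) ->
            (forall k, ~ (R (proj1_sig i) k /\ R k (proj1_sig j))) ->
            A (proj1_sig i) (e j) /\
            exists b, D b /\ R (e i) b /\ R b (e j).

End Ord.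

(* Main.v *)
Require Import Defs.
From Stdlib Require Import Classical ClassicalEpsilon FunctionalExtensionality ProofIrrelevance Arith Lia Cantor.


Definition injr {X Y} (A : X -> Prop) (B : Y -> Prop) :=
  exists f : X -> Y, (forall x, A x -> B (f x)) /\
    (forall x y, A x -> A y -> f x = f y -> x = y).

Lemma injr_trans {X Y Z} (A : X -> Prop) (B : Y -> Prop) (C : Z -> Prop) :
  injr A B -> injr B C -> injr A C.
Proof.
  intros [f [Hf1 Hf2]] [g [Hg1 Hg2]]. exists (fun x => g (f x)). split; auto.
Qed.

Lemma injr_sub {X} (A B : X -> Prop) : (forall x, A x -> B x) -> injr A B.
Proof. intros H. exists (fun x => x). split; auto. Qed.

Lemma injr_prod {X Y X' Y'} (A : X -> Prop) (B : Y -> Prop) (A' : X' -> Prop) (B' : Y' -> Prop) :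
  injr A B -> injr A' B' ->
  injr (fun p => A (fst p) /\ A' (snd p)) (fun q => B (fst q) /\ B' (snd q)).
Proof.
  intros [f [Hf1 Hf2]] [g [Hg1 Hg2]].
  exists (fun p => (f (fst p), g (snd p))). split.
  - intros [x y] [H1 H2]; simpl in *; auto.
  - intros [x y] [x' y'] [H1 H2] [H3 H4] E; simpl in *. injection E; intros.
    f_equal; auto.
Qed.

Definition sumP {X Y} (A : X -> Prop) (B : Y -> Prop) (u : X + Y) : Prop :=
  match u with inl x => A x | inr y => B y end.

Lemma injr_sum {X Y X' Y'} (A : X -> Prop) (B : Y -> Prop) (A' : X' -> Prop) (B' : Y' -> Prop) :
  injr A A' -> injr B B' -> injr (sumP A B) (sumP A' B').
Proof.
  intros [f [Hf1 Hf2]] [g [Hg1 Hg2]].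
  exists (fun u => match u with inl x => inl (f x) | inr y => inr (g y) end). split.
  - intros [x|y] H; simpl in *; auto.
  - intros [x|y] [x'|y'] H1 H2 E; simpl in *; try discriminate; injection E; intros; f_equal; auto.
Qed.

Lemma surj_injr {X Y} (i : inhabited X) (A : X -> Prop) (B : Y -> Prop) (Rel : X -> Y -> Prop) :
  (forall y, B y -> exists x, A x /\ Rel x y) ->
  (forall x y y', Rel x y -> Rel x y' -> y = y') -> injr B A.
Proof.
  intros H1 H2. exists (fun y => epsilon i (fun x => A x /\ Rel x y)). split.
  - intros y By. apply (epsilon_spec i (fun x => A x /\ Rel x y) (H1 y By)).
  - intros y y' By By' E.
    pose proof (epsilon_spec i (fun x => A x /\ Rel x y) (H1 y By)) as [_ E1].
    pose proof (epsilon_spec i (fun x => A x /\ Rel x y') (H1 y' By')) as [_ E2].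
    rewrite E in E1. eauto.
Qed.

Lemma rec_choice {W T} (i : inhabited T) (lt : W -> W -> Prop) (wfl : well_founded lt)
  (P : forall w, (forall w', lt w' w -> T) -> T -> Prop) :
  (forall w rec, exists t, P w rec t) ->
  exists phi : W -> T, forall w, P w (fun w' _ => phi w') (phi w).
Proof.
  intros H.
  set (F := fun w (rec : forall w', lt w' w -> T) => epsilon i (P w rec)).
  exists (Fix wfl (fun _ => T) F).
  intros w. rewrite Fix_eq.
  - apply epsilon_spec, H.
  - intros x f g Hfg. unfold F.
    assert (E : f = g).
    { apply functional_extensionality_dep; intro y; apply functional_extensionality_dep; intro h; apply Hfg. }
    rewrite E; reflexivity.
Qed.

Lemma nat_pigeon : forall n (g : nat -> nat), (forall k, g k < n) -> exists a b, a <> b /\ g a = g b.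
Proof.
  induction n; intros g Hg.
  - specialize (Hg 0); lia.
  - destruct (classic (exists k0, g k0 = n)) as [[k0 Hk0]|N].
    + destruct (classic (exists k, k0 < k /\ g k = n)) as [[k [Hk1 Hk2]]|N2].
      * exists k0, k. split; [lia|congruence].
      * destruct (IHn (fun k => g (S k0 + k))) as [a [b [Hab E]]].
        -- intros k. specialize (Hg (S k0 + k)). destruct (Nat.eq_dec (g (S k0 + k)) n).
           ++ exfalso; apply N2; exists (S k0 + k); split; [lia|auto].
           ++ lia.
        -- exists (S k0 + a), (S k0 + b). split; [lia|auto].
    + apply IHn. intros k. specialize (Hg k). destruct (Nat.eq_dec (g k) n).
      * exfalso; apply N; eauto.
      * lia.
Qed.


Section Basics.
Context {K : Type} (R : K -> K -> Prop) (WO : strict_wellorder R).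

Lemma irr x : ~ R x x. Proof. destruct WO as [H _]; apply H. Qed.
Lemma trn x y z : R x y -> R y z -> R x z. Proof. destruct WO as [_ [H _]]; apply H. Qed.
Lemma tri x y : R x y \/ x = y \/ R y x. Proof. destruct WO as [_ [_ [H _]]]; apply H. Qed.
Lemma wfR : well_founded R. Proof. destruct WO as [_ [_ [_ H]]]; apply H. Qed.
Lemma asy x y : R x y -> R y x -> False. Proof. intros. apply (irr x). eapply trn; eauto. Qed.

Lemma wf_min (P : K -> Prop) x : P x -> exists m, P m /\ forall y, R y m -> ~ P y.
Proof.
  revert x. apply (well_founded_ind wfR (fun x => P x -> exists m, P m /\ forall y, R y m -> ~ P y)).
  intros x IH Px. destruct (classic (exists y, R y x /\ P y)) as [[y [Ryx Py]]|N].
  - apply (IH y Ryx Py).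
  - exists x; split; auto. intros y Ryx Py; apply N; eauto.
Qed.

Lemma le_trans x y z : le R x y -> le R y z -> le R x z.
Proof. unfold le; intros [H|H] [H'|H']; subst; eauto using trn. Qed.
Lemma le_R_trans x y z : le R x y -> R y z -> R x z.
Proof. unfold le; intros [H|H] H'; subst; eauto using trn. Qed.
Lemma R_le_trans x y z : R x y -> le R y z -> R x z.
Proof. unfold le; intros H [H'|H']; subst; eauto using trn. Qed.
Lemma not_R_le x y : ~ R x y -> le R y x.
Proof. intros H. unfold le. destruct (tri x y) as [?|[?|?]]; auto; tauto. Qed.
Lemma le_not_R x y : le R x y -> ~ R y x.
Proof. intros [H|H] H'; subst; [eapply asy; eauto | eapply irr; eauto]. Qed.

Definition segp (a : K) : K -> Prop := fun x => R x a.

Lemma injects_injr a b : injects (seg R a) (seg R b) -> injr (segp a) (segp b).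
Proof.
  intros [f Hf].
  exists (fun x => match excluded_middle_informative (R x a) with
                   | left h => proj1_sig (f (exist _ x h)) | right _ => x end).
  split.
  - intros x Hx. destruct (excluded_middle_informative (R x a)) as [h|h]; [|tauto].
    exact (proj2_sig (f (exist _ x h))).
  - intros x y Hx Hy. destruct (excluded_middle_informative (R x a)) as [h|h]; [|tauto].
    destruct (excluded_middle_informative (R y a)) as [h'|h']; [|tauto].
    intros E. apply eq_sig_hprop in E; [|intros; apply proof_irrelevance].
    apply Hf in E. injection E; auto.
Qed.

Lemma injr_injectsK b : injr (fun _ : K => True) (segp b) -> injects K (seg R b).
Proof.
  intros [f [H1 H2]]. exists (fun x => exist _ (f x) (H1 x I)).
  intros x y E. injection E. intros; apply H2; auto.
Qed.

Definition sc (x : K) : K :=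
  epsilon (inhabits x) (fun y => R x y /\ forall z, R x z -> le R y z).

Lemma sc_spec x : (exists z, R x z) -> R x (sc x) /\ forall z, R x z -> le R (sc x) z.
Proof.
  intros [z Hz]. unfold sc. apply epsilon_spec.
  destruct (wf_min (fun y => R x y) z Hz) as [m [Hm1 Hm2]].
  exists m; split; auto. intros w Hw. apply not_R_le. intros Hw'. apply (Hm2 w Hw' Hw).
Qed.

Lemma below_sc x y : (exists z, R x z) -> R y (sc x) -> le R y x.
Proof.
  intros Hx Hy. apply not_R_le. intros H. destruct (sc_spec x Hx) as [_ H2].
  apply (le_not_R _ _ (H2 y H) Hy).
Qed.

Lemma sc_inj x y : (exists z, R x z) -> (exists z, R y z) -> sc x = sc y -> x = y.
Proof.
  intros Hx Hy E. destruct (tri x y) as [H|[H|H]]; auto; exfalso.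
  - destruct (sc_spec x Hx) as [_ H2]. pose proof (H2 y H). rewrite E in H0.
    destruct (sc_spec y Hy) as [H3 _]. eapply le_not_R; eauto.
  - destruct (sc_spec y Hy) as [_ H2]. pose proof (H2 x H). rewrite <- E in H0.
    destruct (sc_spec x Hx) as [H3 _]. eapply le_not_R; eauto.
Qed.

Definition z0 : K -> K := fun x => epsilon (inhabits x) (fun m => forall y, ~ R y m).
Lemma z0_spec x : forall y, ~ R y (z0 x).
Proof.
  unfold z0. apply (epsilon_spec (inhabits x) (fun m => forall y, ~ R y m)).
  destruct (wf_min (fun _ => True) x I) as [m [_ Hm]]. exists m; intros y Hy; apply (Hm y Hy I).
Qed.
Lemma z0_le x y : le R (z0 x) y.
Proof. apply not_R_le. apply z0_spec. Qed.

End Basics.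


Section Omega.
Context {K : Type} (R : K -> K -> Prop) (WO : strict_wellorder R)
  (lam : K) (Hsc : is_successor_cardinal_of R lam) (Hlim : is_limit R lam).

Notation Z := (z0 R lam).
Notation s := (sc R).

Lemma Z_lt_lam : R Z lam.
Proof.
  destruct Hlim as [[x Hx] _]. destruct (z0_le R WO lam x) as [H|H]; [eapply trn; eauto|subst; auto].
Qed.

Lemma sc_lt_lim a x : is_limit R a -> R x a -> R (s x) a.
Proof.
  intros [_ Ha] Hx. destruct (Ha x Hx) as [y [H1 H2]].
  destruct (sc_spec R WO x (ex_intro _ a Hx)) as [_ H]. eapply le_R_trans; eauto.
Qed.

Lemma no_max x : exists y, R x y.
Proof.
  apply NNPP; intros N.
  assert (Hm : forall y, le R y x).
  { intros y. apply (not_R_le R WO). intros H; apply N; eauto. }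
  destruct Hsc as [Hs1 Hs2]. apply Hs2. apply injr_injectsK.
  destruct (injects_injr R x lam (Hs1 x)) as [f [Hf1 Hf2]].
  exists (fun y => match excluded_middle_informative (y = x) with left _ => Z | right _ => s (f y) end).
  split.
  - intros y _. destruct (excluded_middle_informative (y = x)). apply Z_lt_lam.
    apply sc_lt_lim; auto. apply Hf1. destruct (Hm y); tauto.
  - intros y y' _ _.
    assert (Hn : forall u, R u lam -> s u <> Z).
    { intros u Hu E. destruct (sc_spec R WO u (ex_intro _ lam Hu)) as [H _]. rewrite E in H.
      apply (z0_spec R WO lam u H). }
    destruct (excluded_middle_informative (y = x)) as [e|e];
    destruct (excluded_middle_informative (y' = x)) as [e'|e']; intros E; try congruence.
    + exfalso; apply (Hn (f y')); auto. apply Hf1. destruct (Hm y'); tauto.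
    + exfalso; apply (Hn (f y)); auto. apply Hf1. destruct (Hm y); tauto.
    + assert (Ry : R y x) by (destruct (Hm y); tauto).
      assert (Ry' : R y' x) by (destruct (Hm y'); tauto).
      apply (sc_inj R WO) in E; try (exists lam; apply Hf1; auto). apply Hf2; auto.
Qed.

Lemma sc_gt x : R x (s x).
Proof. apply (sc_spec R WO x (no_max x)). Qed.
Lemma sc_min x z : R x z -> le R (s x) z.
Proof. apply (sc_spec R WO x (no_max x)). Qed.
Lemma below_sc' x y : R y (s x) -> le R y x.
Proof. apply (below_sc R WO x y (no_max x)). Qed.
Lemma sc_inj' x y : s x = s y -> x = y.
Proof. apply (sc_inj R WO x y (no_max x) (no_max y)). Qed.

Definition it (n : nat) : K := Nat.iter n s Z.

Lemma it_S n : it (S n) = s (it n). Proof. reflexivity. Qed.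

Lemma it_mono n m : n < m -> R (it n) (it m).
Proof.
  induction m; intros H; [lia|]. rewrite it_S.
  destruct (Nat.eq_dec n m); [subst; apply sc_gt|]. eapply trn; [apply WO|apply IHm; lia|apply sc_gt].
Qed.

Lemma it_inj n m : it n = it m -> n = m.
Proof.
  intros E. destruct (Nat.lt_trichotomy n m) as [H|[H|H]]; auto; exfalso;
  apply it_mono in H; rewrite E in H; eapply irr; eauto.
Qed.

Lemma below_it n y : R y (it n) -> exists k, k < n /\ y = it k.
Proof.
  induction n; intros H.
  - exfalso. apply (z0_spec R WO lam y H).
  - rewrite it_S in H. apply below_sc' in H. destruct H as [H|H].
    + destruct (IHn H) as [k [Hk E]]. exists k; split; auto.
    + exists n; split; auto.
Qed.

Lemma lam_not_it n : lam <> it n.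
Proof.
  destruct n; intros E.
  - destruct Hlim as [[x Hx] _]. rewrite E in Hx. apply (z0_spec R WO lam x Hx).
  - rewrite it_S in E. destruct Hlim as [_ H]. 
    assert (Hx : R (it n) lam) by (rewrite E; apply sc_gt).
    destruct (H _ Hx) as [y [H1 H2]]. rewrite E in H2. apply below_sc' in H2.
    eapply le_not_R; eauto.
Qed.

Definition om : K := epsilon (inhabits lam) (fun w => (forall n, w <> it n) /\ forall y, R y w -> exists n, y = it n).

Lemma om_spec : (forall n, om <> it n) /\ forall y, R y om -> exists n, y = it n.
Proof.
  unfold om. apply epsilon_spec.
  destruct (wf_min R WO (fun w => forall n, w <> it n) lam lam_not_it) as [m [Hm1 Hm2]].
  exists m; split; auto. intros y Hy. specialize (Hm2 y Hy). apply NNPP; intros N; apply Hm2.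
  intros n E; apply N; eauto.
Qed.

Lemma it_lt_om n : R (it n) om.
Proof.
  destruct om_spec as [H1 H2]. destruct (tri R WO (it n) om) as [H|[H|H]]; auto.
  - exfalso; apply (H1 n); auto.
  - destruct (below_it n om H) as [k [_ E]]. exfalso; apply (H1 k); auto.
Qed.

Lemma below_om y : R y om -> exists n, y = it n.
Proof. apply om_spec. Qed.

Lemma om_le_lam : le R om lam.
Proof.
  apply not_R_le; auto. intros H. destruct (below_om lam H) as [n E]. apply (lam_not_it n E).
Qed.

Lemma om_limit : is_limit R om.
Proof.
  split.
  - exists (it 0); apply it_lt_om.
  - intros x Hx. destruct (below_om x Hx) as [n E]; subst. exists (it (S n)); split.
    + apply it_mono; lia.
    + apply it_lt_om.
Qed.

Definition idx (x : K) : nat := epsilon (inhabits 0) (fun n => x = it n).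
Lemma idx_spec x : R x om -> x = it (idx x).
Proof. intros H. unfold idx. apply (epsilon_spec (inhabits 0) (fun n => x = it n)). apply below_om; auto. Qed.
Lemma idx_it n : idx (it n) = n.
Proof. apply it_inj. symmetry. apply idx_spec. apply it_lt_om. Qed.

Lemma pigeon n : ~ injr (segp R om) (segp R (it n)).
Proof.
  intros [f [Hf1 Hf2]].
  destruct (nat_pigeon n (fun k => idx (f (it k)))) as [a [b [Hab E]]].
  - intros k. pose proof (Hf1 (it k) (it_lt_om k)). unfold segp in H.
    destruct (below_it n _ H) as [j [Hj E]]. rewrite E, idx_it; auto.
  - apply Hab. apply it_inj. apply Hf2; try apply it_lt_om.
    assert (Ha : R (f (it a)) om) by (eapply trn; [apply WO|apply (Hf1 (it a) (it_lt_om a))|apply it_lt_om]).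
    assert (Hb : R (f (it b)) om) by (eapply trn; [apply WO|apply (Hf1 (it b) (it_lt_om b))|apply it_lt_om]).
    rewrite (idx_spec _ Ha), (idx_spec _ Hb). simpl in E. rewrite E; auto.
Qed.

Lemma finite_bound n (h : K -> K) : (forall k, k < n -> R (h (it k)) om) ->
  exists b, R b om /\ forall k, k < n -> le R (h (it k)) b.
Proof.
  induction n; intros H.
  - exists (it 0); split; [apply it_lt_om| intros; lia].
  - destruct IHn as [b [Hb1 Hb2]]; [intros; apply H; lia|].
    destruct (classic (R b (h (it n)))) as [Hc|Hc].
    + exists (h (it n)); split; [apply H; lia|]. intros k Hk.
      destruct (Nat.eq_dec k n); [subst; right; auto|].
      left. eapply le_R_trans; [apply WO| apply Hb2; lia| auto].
    + exists b; split; auto. intros k Hk. destruct (Nat.eq_dec k n); [subst; apply not_R_le; auto|].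
      apply Hb2; lia.
Qed.

Lemma om_lt_lam : singular_cardinal R lam -> R om lam.
Proof.
  intros [_ [_ [mu [Hmu [f Hf]]]]].
  destruct om_le_lam as [H|H]; auto. exfalso.
  rewrite <- H in Hmu. destruct (below_om mu Hmu) as [n En].
  set (h := fun y => match excluded_middle_informative (R y mu) with
                     | left p => proj1_sig (f (exist _ y p)) | right _ => Z end).
  destruct (finite_bound n h) as [b [Hb1 Hb2]].
  - intros k Hk. unfold h. destruct (excluded_middle_informative (R (it k) mu)) as [p|p].
    + rewrite H. exact (proj2_sig (f (exist _ (it k) p))).
    + rewrite H; apply Z_lt_lam.
  - assert (Hsb : R (s b) lam) by (rewrite <- H; apply sc_lt_lim; auto; apply om_limit).
    destruct (Hf (s b) Hsb) as [[i Hi] Hi2]. simpl in Hi2.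
    assert (Hi' : R i (it n)) by (rewrite <- En; exact Hi).
    destruct (below_it n i Hi') as [k [Hk Ek]]. subst i.
    specialize (Hb2 k Hk). unfold h in Hb2.
    destruct (excluded_middle_informative (R (it k) mu)) as [p|p].
    + assert (E : exist (fun x => R x mu) (it k) p = exist _ (it k) Hi) by (apply eq_sig_hprop; auto; intros; apply proof_irrelevance).
      rewrite E in Hb2.
      pose proof (le_trans R WO _ _ _ Hi2 Hb2). eapply le_not_R; eauto. apply sc_gt.
    + rewrite En in p. tauto.
Qed.

Lemma hotel a : le R om a -> injr (sumP (segp R a) (fun _ : nat => True)) (segp R a).
Proof.
  intros Ha.
  exists (fun u => match u with
    | inl x => match excluded_middle_informative (R x om) with
               | left _ => it (2 * idx x) | right _ => x end
    | inr n => it (2 * n + 1) end).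
  assert (Hi : forall n, R (it n) a) by (intros; eapply R_le_trans; [apply WO|apply it_lt_om|auto]).
  split.
  - intros [x|n] Hx; unfold segp, sumP in *; auto.
    destruct (excluded_middle_informative (R x om)); auto.
  - intros [x|n] [y|m] Hx Hy; simpl in *.
    + destruct (excluded_middle_informative (R x om)) as [p|p];
      destruct (excluded_middle_informative (R y om)) as [q|q]; intros E.
      * apply it_inj in E. f_equal. rewrite (idx_spec x p), (idx_spec y q). f_equal; lia.
      * exfalso; apply q. rewrite <- E; apply it_lt_om.
      * exfalso; apply p. rewrite E; apply it_lt_om.
      * f_equal; auto.
    + destruct (excluded_middle_informative (R x om)) as [p|p]; intros E.
      * apply it_inj in E. lia.
      * exfalso; apply p. rewrite E; apply it_lt_om.
    + destruct (excluded_middle_informative (R y om)) as [p|p]; intros E.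
      * apply it_inj in E. lia.
      * exfalso; apply p. rewrite <- E; apply it_lt_om.
    + intros E. apply it_inj in E. f_equal; lia.
Qed.

End Omega.


Section Godel.
Context {K : Type} (R : K -> K -> Prop) (WO : strict_wellorder R).

Definition mx (x y : K) : K := if excluded_middle_informative (R x y) then y else x.

Lemma mx_ge1 x y : le R x (mx x y).
Proof. unfold mx, le; destruct excluded_middle_informative; auto. Qed.
Lemma mx_ge2 x y : le R y (mx x y).
Proof. unfold mx; destruct excluded_middle_informative; [right; auto|]. apply (not_R_le R WO); auto. Qed.
Lemma mx_cases x y : mx x y = x \/ mx x y = y.
Proof. unfold mx; destruct excluded_middle_informative; auto. Qed.

Definition mxp (p : K * K) := mx (fst p) (snd p).

Definition G (p q : K * K) : Prop :=
  R (mxp p) (mxp q) \/ (mxp p = mxp q /\ (R (fst p) (fst q) \/ (fst p = fst q /\ R (snd p) (snd q)))).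

Lemma G_wf : well_founded G.
Proof.
  assert (H : forall m x y, mx x y = m -> Acc G (x, y)).
  { intros m. induction m as [m IHm] using (well_founded_ind (wfR R WO)).
    intros x. induction x as [x IHx] using (well_founded_ind (wfR R WO)).
    intros y. induction y as [y IHy] using (well_founded_ind (wfR R WO)).
    intros Hm. constructor. intros [x' y'] HG. unfold G, mxp in HG; simpl in HG.
    destruct HG as [H1 | [H2 [H3 | [H4 H5]]]].
    - rewrite Hm in H1. eapply IHm; eauto.
    - rewrite Hm in H2. eapply IHx; eauto.
    - subst x'. rewrite Hm in H2. eapply IHy; eauto. }
  intros [x y]. eapply H; eauto.
Qed.

Lemma G_tri p q : p = q \/ G p q \/ G q p.
Proof.
  destruct p as [x y], q as [x' y']. unfold G, mxp; simpl.
  destruct (tri R WO (mx x y) (mx x' y')) as [H|[H|H]]; auto.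
  destruct (tri R WO x x') as [H1|[H1|H1]]; auto 6.
  subst. destruct (tri R WO y y') as [H2|[H2|H2]]; subst; auto 7.
Qed.

Definition pairs (a : K) : K * K -> Prop := fun p => R (fst p) a /\ R (snd p) a.

Lemma G_below_le p q : G p q -> le R (mxp p) (mxp q).
Proof. intros [H|[H _]]; [left|right]; auto. Qed.

Lemma le_mx_lt x y a : R x a -> R y a -> R (mx x y) a.
Proof. intros. destruct (mx_cases x y) as [E|E]; rewrite E; auto. Qed.

End Godel.

Section HS.
Context {K : Type} (R : K -> K -> Prop) (WO : strict_wellorder R)
  (lam : K) (Hsc : is_successor_cardinal_of R lam) (Hlim : is_limit R lam).

Notation OM := (om R lam).
Notation IT := (it R lam).
Notation s := (sc R).
Let sgt := sc_gt R WO lam Hsc Hlim.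
Let smin := sc_min R WO lam Hsc Hlim.
Let bsc := below_sc' R WO lam Hsc Hlim.
Let itlt := it_lt_om R WO lam Hsc Hlim.
Let bom := below_om R WO lam Hsc Hlim.
Let idxs := idx_spec R WO lam Hsc Hlim.

Lemma G_below p q : G R p q -> R (fst p) (s (mxp R q)) /\ R (snd p) (s (mxp R q)).
Proof.
  intros HG. pose proof (G_below_le R p q HG) as H. unfold mxp in *.
  split.
  - apply (le_R_trans R WO _ (mx R (fst q) (snd q))); [|apply sgt].
    eapply (le_trans R WO); [apply mx_ge1|exact H].
  - apply (le_R_trans R WO _ (mx R (fst q) (snd q))); [|apply sgt].
    eapply (le_trans R WO); [apply (mx_ge2 R WO)|exact H].
Qed.

Definition HSP (a : K) := injr (pairs R a) (segp R a).

Lemma HS_om : HSP OM.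
Proof.
  exists (fun p => IT (Cantor.to_nat (idx R lam (fst p), idx R lam (snd p)))). split.
  - intros p _. apply itlt.
  - intros [x y] [x' y'] [Hx Hy] [Hx' Hy'] E. cbn [fst snd] in *.
    apply (it_inj R WO lam Hsc Hlim) in E.
    apply (f_equal Cantor.of_nat) in E. rewrite !Cantor.cancel_of_to in E.
    injection E; intros E1 E2. rewrite (idxs x Hx), (idxs y Hy), (idxs x' Hx'), (idxs y' Hy').
    rewrite E1, E2; auto.
Qed.

Theorem HS : forall a, le R OM a -> HSP a.
Proof.
  intros a. induction a as [a IH] using (well_founded_ind (wfR R WO)). intros Ha.
  destruct (classic (exists b, R b a /\ injr (segp R a) (segp R b))) as [[b [Hb Hinj]]|Hc].
  - destruct (classic (R b OM)) as [HbO|HbO].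
    + exfalso. destruct (bom b HbO) as [n En]. subst.
      apply (pigeon R WO lam Hsc Hlim n). eapply injr_trans; [apply injr_sub|exact Hinj].
      intros x Hx; unfold segp in *; eapply R_le_trans; eauto.
    + assert (Hb' : le R OM b) by (apply (not_R_le R WO); auto).
      pose proof (IH b Hb Hb') as HSb.
      eapply injr_trans; [apply (injr_prod _ _ _ _ Hinj Hinj)|].
      eapply injr_trans; [exact HSb|]. apply injr_sub. intros x Hx; unfold segp in *; eapply trn; eauto.
  - destruct Ha as [Ha|Ha]; [|subst; apply HS_om].
    assert (Hsm : forall m, R m a -> R (s m) a).
    { intros m Hm. destruct (smin m a Hm) as [H|H]; auto. exfalso.
      destruct (classic (R m OM)) as [HmO|HmO].
      - assert (H0 : R (s m) OM) by (apply (sc_lt_lim R WO); auto; apply (om_limit R WO lam Hsc Hlim)).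
        rewrite H in H0. eapply (asy R WO); eauto.
      - apply Hc. exists m. split; auto.
        eapply injr_trans; [|apply (hotel R WO lam Hsc Hlim m (not_R_le R WO _ _ HmO))].
        exists (fun y => if excluded_middle_informative (y = m) then inr 0 else inl y). split.
        + intros y Hy. destruct (excluded_middle_informative (y = m)); simpl; auto.
          unfold segp in *. rewrite <- H in Hy. destruct (bsc m y Hy); tauto.
        + intros y y' Hy Hy'.
          destruct (excluded_middle_informative (y = m)); destruct (excluded_middle_informative (y' = m));
          intros E; try discriminate; try congruence. }
    assert (Hsmall : forall w, pairs R a w -> exists c, R c a /\ injr (fun w' => G R w' w /\ pairs R a w') (segp R c)).
    { intros [x y] [Hx Hy]. simpl in Hx, Hy.
      assert (Hm : R (mx R x y) a) by (apply le_mx_lt; auto).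
      assert (Hsub : injr (fun w' => G R w' (x,y) /\ pairs R a w') (pairs R (s (mx R x y)))).
      { apply injr_sub. intros w' [HG _]. apply G_below in HG. exact HG. }
      destruct (classic (R (s (mx R x y)) OM)) as [HcO|HcO].
      - exists OM. split; auto. eapply injr_trans; [exact Hsub|]. eapply injr_trans; [|apply HS_om].
        apply injr_sub. intros [u v] [Hu Hv]; split; simpl in *; eapply trn; eauto.
      - exists (s (mx R x y)). split; [apply Hsm; auto|]. eapply injr_trans; [exact Hsub|].
        apply IH; [apply Hsm; auto| apply (not_R_le R WO); auto]. }
    destruct (rec_choice (inhabits a) (G R) (G_wf R WO)
      (fun w rec t => pairs R a w -> R t a /\ forall w' (h : G R w' w), pairs R a w' -> rec w' h <> t))
      as [phi Hphi].
    { intros w rec. destruct (classic (pairs R a w)) as [Hw|Hw]; [|exists a; tauto].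
      destruct (Hsmall w Hw) as [c [Hc1 Hc2]].
      apply NNPP. intros N. apply Hc. exists c. split; auto.
      eapply injr_trans; [|exact Hc2].
      apply (surj_injr (inhabits w) _ _ (fun w' t => exists h, rec w' h = t)).
      - intros t Ht. apply NNPP; intros N2. apply N. exists t. intros _. split; auto.
        intros w' h Hw' E. apply N2. exists w'. split; [split; auto|]. exists h; auto.
      - intros w' t t' [h1 E1] [h2 E2]. rewrite <- E1, <- E2. f_equal. apply proof_irrelevance. }
    exists phi. split.
    + intros w Hw. apply (Hphi w Hw).
    + intros w w' Hw Hw' E. destruct (G_tri R WO w w') as [H|[H|H]]; auto; exfalso.
      * destruct (Hphi w' Hw') as [_ H2]. apply (H2 w H Hw E).
      * destruct (Hphi w Hw) as [_ H2]. apply (H2 w' H Hw' (eq_sym E)).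
Qed.

End HS.


Lemma injr_injects {K} (R : K -> K -> Prop) a b : injr (segp R a) (segp R b) -> injects (seg R a) (seg R b).
Proof.
  intros [f [H1 H2]]. exists (fun x => exist _ (f (proj1_sig x)) (H1 _ (proj2_sig x))).
  intros [x hx] [y hy] E. injection E; intros E'. simpl in E'.
  assert (x = y) by (apply H2; auto). subst. f_equal. apply proof_irrelevance.
Qed.

Section Part5.
Context {K : Type} (R : K -> K -> Prop) (WO : strict_wellorder R)
  (lam : K) (Hsc : is_successor_cardinal_of R lam) (Hlim : is_limit R lam)
  (Hcard : is_cardinal R lam) (Hsing : singular_cardinal R lam).

Notation OM := (om R lam).
Notation s := (sc R).
Notation Z := (z0 R lam).
Let sgt := sc_gt R WO lam Hsc Hlim.
Let smin := sc_min R WO lam Hsc Hlim.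
Let bsc := below_sc' R WO lam Hsc Hlim.

Lemma seg_lam a : injr (segp R a) (segp R lam).
Proof. apply injects_injr. apply Hsc. Qed.

Lemma K_not_lam : ~ injr (fun _ : K => True) (segp R lam).
Proof. intros H. apply Hsc. apply injr_injectsK. auto. Qed.

Lemma om_lam : le R OM lam.
Proof. left. apply (om_lt_lam R WO lam Hsc Hlim Hsing). Qed.

Lemma HS_lam : HSP R lam.
Proof. apply (HS R WO lam Hsc Hlim). apply om_lam. Qed.

Lemma sum_lam : injr (sumP (segp R lam) (segp R lam)) (segp R lam).
Proof.
  eapply injr_trans; [|apply HS_lam].
  exists (fun u => match u with inl x => (x, Z) | inr x => (x, s Z) end). split.
  - intros [x|x] Hx; unfold pairs, sumP, segp in *; simpl; split; auto.
    all: first [apply (Z_lt_lam R WO lam Hlim) | apply (sc_lt_lim R WO); auto; apply (Z_lt_lam R WO lam Hlim)].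
  - intros [x|x] [y|y] _ _ E; injection E; intros; subst; auto.
    + exfalso. apply (irr R WO Z). rewrite H at 2. apply sgt.
    + exfalso. apply (irr R WO Z). rewrite <- H at 2. apply sgt.
Qed.

Lemma psi_exists : exists Psi : K * K -> K,
  (forall v g, le R g (Psi (v, g))) /\ (forall p q, Psi p = Psi q -> p = q).
Proof.
  destruct (rec_choice (inhabits lam) (G R) (G_wf R WO)
    (fun w rec t => le R (snd w) t /\ forall w' (h : G R w' w), rec w' h <> t)) as [phi Hphi].
  - intros [v g] rec. apply NNPP; intros N. apply K_not_lam.
    assert (Hc : forall t, le R g t -> exists w', exists h, rec w' h = t).
    { intros t Ht. apply NNPP; intros N2. apply N. exists t. split; auto.
      intros w' h E. apply N2; eauto. }
    set (w := (v, g)).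
    eapply injr_trans; [|apply sum_lam].
    eapply injr_trans with (B := sumP (segp R g) (fun w' => G R w' w)).
    + exists (fun t => if excluded_middle_informative (R t g) then inl t
               else inr (epsilon (inhabits w) (fun w' => exists h, rec w' h = t))).
      split.
      * intros t _. destruct (excluded_middle_informative (R t g)) as [p|p]; simpl; auto.
        assert (Ht : le R g t) by (apply (not_R_le R WO); auto).
        destruct (epsilon_spec (inhabits w) (fun w' => exists h, rec w' h = t) (Hc t Ht)) as [h _].
        exact h.
      * intros t t' _ _.
        destruct (excluded_middle_informative (R t g)) as [p|p];
        destruct (excluded_middle_informative (R t' g)) as [p'|p']; intros E; try discriminate.
        -- injection E; auto.
        -- injection E; intros E'.
           assert (Ht : le R g t) by (apply (not_R_le R WO); auto).
           assert (Ht' : le R g t') by (apply (not_R_le R WO); auto).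
           destruct (epsilon_spec (inhabits w) (fun w' => exists h, rec w' h = t) (Hc t Ht)) as [h1 E1].
           destruct (epsilon_spec (inhabits w) (fun w' => exists h, rec w' h = t') (Hc t' Ht')) as [h2 E2].
           revert h1 E1. rewrite E'. intros h1 E1. rewrite <- E1, <- E2. f_equal. apply proof_irrelevance.
    + apply injr_sum; [apply seg_lam|].
      eapply injr_trans; [|apply HS_lam].
      eapply injr_trans with (B := pairs R (s (mxp R w))).
      * apply injr_sub. intros w' HG. apply (G_below R WO lam Hsc Hlim w' w HG).
      * exact (injr_prod _ _ _ _ (seg_lam _) (seg_lam _)).
  - exists phi. split.
    + intros v g. apply (Hphi (v, g)).
    + intros p q E. destruct (G_tri R WO p q) as [H|[H|H]]; auto; exfalso.
      * destruct (Hphi q) as [_ H2]. apply (H2 p H E).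
      * destruct (Hphi p) as [_ H2]. apply (H2 q H (eq_sym E)).
Qed.

Definition itc (c : K) (n : nat) : K := Nat.iter n s c.

Lemma itc_mono c n m : n < m -> R (itc c n) (itc c m).
Proof.
  induction m; intros H; [lia|]. simpl.
  destruct (Nat.eq_dec n m); [subst; apply sgt|]. eapply (trn R WO); [apply IHm; lia|apply sgt].
Qed.

Lemma itc_inj c n m : itc c n = itc c m -> n = m.
Proof.
  intros E. destruct (Nat.lt_trichotomy n m) as [H|[H|H]]; auto; exfalso;
  apply (itc_mono c) in H; rewrite E in H; eapply (irr R WO); eauto.
Qed.

Lemma lim_cof c : R c lam -> exists th, is_limit R th /\ le R c th /\ R th lam.
Proof.
  intros Hc.
  destruct (classic (le R c OM)) as [HcO|HcO].
  { exists OM. split; [apply (om_limit R WO lam Hsc Hlim)|split; auto].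
    apply (om_lt_lam R WO lam Hsc Hlim Hsing). }
  assert (HOc : R OM c) by (destruct (tri R WO c OM) as [H|[H|H]]; auto; exfalso; apply HcO; [left|right]; auto).
  apply NNPP; intros N.
  assert (Hall : forall x, le R c x -> R x lam -> exists n, x = itc c n).
  { intros x. induction x as [x IH] using (well_founded_ind (wfR R WO)). intros Hcx Hx.
    destruct Hcx as [Hcx|Hcx]; [|subst; exists 0; reflexivity].
    assert (Hnl : ~ is_limit R x) by (intros Hl; apply N; exists x; split; auto; split; auto; left; auto).
    assert (Hy : exists y, R y x /\ forall z, ~ (R y z /\ R z x)).
    { apply NNPP; intros N2. apply Hnl. split; [exists c; auto|].
      intros y Hy. apply NNPP; intros N3. apply N2. exists y. split; auto. intros z Hz; apply N3; eauto. }
    destruct Hy as [y [Hyx Hy]].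
    assert (Ex : s y = x).
    { destruct (smin y x Hyx) as [H|H]; auto. exfalso. apply (Hy (s y)). split; auto. }
    assert (Hcy : le R c y).
    { apply (not_R_le R WO). intros H. destruct (smin y c H) as [H1|H1]; rewrite Ex in H1.
      - eapply (asy R WO); eauto.
      - subst. eapply (irr R WO); eauto. }
    destruct (IH y Hyx Hcy (trn R WO _ _ _ Hyx Hx)) as [n En].
    exists (S n). simpl. rewrite <- En. auto. }
  apply (Hcard c Hc). apply injr_injects.
  eapply injr_trans; [|apply (hotel R WO lam Hsc Hlim c (or_introl HOc))].
  exists (fun x => if excluded_middle_informative (R x c) then inl x
           else inr (epsilon (inhabits 0) (fun n => x = itc c n))).
  split.
  - intros x Hx. destruct (excluded_middle_informative (R x c)); simpl; auto.
  - intros x y Hx Hy.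
    destruct (excluded_middle_informative (R x c)) as [p|p];
    destruct (excluded_middle_informative (R y c)) as [q|q]; intros E; try discriminate.
    + injection E; auto.
    + injection E; intros E'.
      assert (E1 := epsilon_spec (inhabits 0) (fun n => x = itc c n) (Hall x (not_R_le R WO _ _ p) Hx)).
      assert (E2 := epsilon_spec (inhabits 0) (fun n => y = itc c n) (Hall y (not_R_le R WO _ _ q) Hy)).
      simpl in E1, E2. rewrite E1, E2, E'. auto.
Qed.

Definition SL := seg R lam -> bool.

Lemma cantor : ~ injr (fun _ : SL => True) (segp R lam).
Proof.
  intros [f [H1 H2]].
  set (D := fun y : seg R lam => if excluded_middle_informative (exists X, f X = proj1_sig y /\ X y = false) then true else false).
  assert (HD : forall y, D y = true <-> exists X, f X = proj1_sig y /\ X y = false).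
  { intros y. unfold D. destruct excluded_middle_informative as [H|H]; split; intros; auto; try discriminate; tauto. }
  set (y0 := exist (fun x => R x lam) (f D) (H1 D I)).
  destruct (D y0) eqn:E.
  - pose proof E as E0. apply HD in E0. destruct E0 as [X [E1 E2]]. assert (X = D) by (apply H2; auto). subst X.
    congruence.
  - assert (D y0 = true) by (apply HD; exists D; split; auto). congruence.
Qed.

Lemma bij_from_inj (h : SL -> K) : (forall X Y, h X = h Y -> X = Y) ->
  exists f : SL -> K, (forall u v, f u = f v -> u = v) /\ (forall y, exists u, f u = y).
Proof.
  intros Hh.
  assert (iSL : inhabited SL) by (constructor; exact (fun _ => true)).
  destruct (rec_choice iSL R (wfR R WO)
    (fun x rec t => (forall y (p : R y x), rec y p <> t) /\
       forall t', (forall y (p : R y x), rec y p <> t') -> le R (h t) (h t'))) as [g Hg].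
  { intros x rec.
    assert (Hun : exists t', forall y (p : R y x), rec y p <> t').
    { apply NNPP; intros N. apply cantor. eapply injr_trans; [|apply (seg_lam x)].
      apply (surj_injr (inhabits x) _ _ (fun y t => exists p, rec y p = t)).
      - intros t _. apply NNPP; intros N2. apply N. exists t. intros y p E. apply N2. exists y; split; [exact p|]. eauto.
      - intros y t t' [p1 E1] [p2 E2]. rewrite <- E1, <- E2. f_equal; apply proof_irrelevance. }
    destruct Hun as [t0 Ht0].
    destruct (wf_min R WO (fun k => exists t', (forall y (p : R y x), rec y p <> t') /\ h t' = k) (h t0)) as [m [[tm [Htm1 Htm2]] Hm]].
    { exists t0; auto. }
    exists tm. split; auto. intros t' Ht'. apply (not_R_le R WO). intros Hlt. subst m.
    apply (Hm (h t') Hlt). exists t'; auto. }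
  assert (ginj : forall x y, g x = g y -> x = y).
  { intros x y E. destruct (tri R WO x y) as [H|[H|H]]; auto; exfalso.
    - destruct (Hg y) as [H1 _]. apply (H1 x H E).
    - destruct (Hg x) as [H1 _]. apply (H1 y H (eq_sym E)). }
  assert (gsurj : forall X, exists x, g x = X).
  { intros X. apply NNPP; intros N. apply K_not_lam.
    eapply injr_trans; [|apply (seg_lam (h X))].
    exists (fun x => h (g x)). split.
    - intros x _. destruct (Hg x) as [_ H2].
      assert (Hle : le R (h (g x)) (h X)) by (apply H2; intros y p E; apply N; eauto).
      destruct Hle as [Hle|Hle]; auto. exfalso. apply N. exists x. apply Hh; auto.
    - intros x y _ _ E. apply ginj, Hh; auto. }
  exists (fun X => epsilon (inhabits lam) (fun x => g x = X)). split.
  - intros u v E.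
    rewrite <- (epsilon_spec (inhabits lam) (fun x => g x = u) (gsurj u)).
    rewrite <- (epsilon_spec (inhabits lam) (fun x => g x = v) (gsurj v)).
    rewrite E; auto.
  - intros y. exists (g y). apply ginj.
    apply (epsilon_spec (inhabits lam) (fun x => g x = g y) (ex_intro _ y eq_refl)).
Qed.

End Part5.


Lemma seg_eq {K} (R : K -> K -> Prop) th (i k : seg R th) : proj1_sig i = proj1_sig k -> i = k.
Proof. intros E. apply eq_sig_hprop; auto. intros; apply proof_irrelevance. Qed.

Section Guess.
Context {K : Type} (R : K -> K -> Prop) (WO : strict_wellorder R)
  (lam : K) (Hsc : is_successor_cardinal_of R lam) (Hlim : is_limit R lam)
  (Hcard : is_cardinal R lam) (Hsing : singular_cardinal R lam)
  (C : K -> K -> Prop)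
  (HG : forall A : K -> K -> Prop,
      (forall i, R i lam -> unbounded R (A i)) ->
      forall theta, R theta lam -> is_limit R theta ->
      forall D, club R D ->
        exists a : K, exists e : seg R theta -> K, otp_iso R theta (C a) e /\
          forall i j : seg R theta,
            R (proj1_sig i) (proj1_sig j) ->
            (forall k, ~ (R (proj1_sig i) k /\ R k (proj1_sig j))) ->
            A (proj1_sig i) (e j) /\
            exists b, D b /\ R (e i) b /\ R b (e j))
  (Psi : K * K -> K) (HP1 : forall v g, le R g (Psi (v, g)))
  (HP2 : forall p q, Psi p = Psi q -> p = q).

Notation s := (sc R).
Notation Z := (z0 R lam).

Lemma iso_uniq th S e e' : otp_iso R th S e -> otp_iso R th S e' -> forall i, e i = e' i.
Proof.
  intros [M1 [In1 Su1]] [M2 [In2 Su2]].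
  assert (H : forall x (i : seg R th), proj1_sig i = x -> e i = e' i).
  { intros x. induction x as [x IH] using (well_founded_ind (wfR R WO)).
    intros i Hi. destruct (tri R WO (e i) (e' i)) as [H|[H|H]]; auto; exfalso.
    - destruct (Su2 (e i) (In1 i)) as [k Ek].
      destruct (tri R WO (proj1_sig k) (proj1_sig i)) as [H1|[H1|H1]].
      + assert (E := IH (proj1_sig k) ltac:(rewrite <- Hi; exact H1) k eq_refl).
        pose proof (M1 k i H1). rewrite E, Ek in H0. eapply (irr R WO); eauto.
      + apply seg_eq in H1. subst k. rewrite Ek in H. eapply (irr R WO); eauto.
      + pose proof (M2 i k H1). rewrite Ek in H0. eapply (asy R WO); eauto.
    - destruct (Su1 (e' i) (In2 i)) as [k Ek].
      destruct (tri R WO (proj1_sig k) (proj1_sig i)) as [H1|[H1|H1]].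
      + assert (E := IH (proj1_sig k) ltac:(rewrite <- Hi; exact H1) k eq_refl).
        pose proof (M2 k i H1). rewrite <- E, Ek in H0. eapply (irr R WO); eauto.
      + apply seg_eq in H1. subst k. rewrite Ek in H. eapply (irr R WO); eauto.
      + pose proof (M1 i k H1). rewrite Ek in H0. eapply (asy R WO); eauto. }
  intros i. eapply H; eauto.
Qed.

Lemma succ_in th i : is_limit R th -> R i th -> exists j, R i j /\ R j th /\ forall k, ~ (R i k /\ R k j).
Proof.
  intros [_ Hl] Hi. destruct (Hl i Hi) as [y Hy].
  destruct (wf_min R WO (fun y => R i y /\ R y th) y Hy) as [m [[Hm1 Hm2] Hm3]].
  exists m. split; auto. split; auto. intros k [Hk1 Hk2]. apply (Hm3 k Hk2). split; auto.
  eapply (trn R WO); eauto.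
Qed.

Definition Aof (th : K) (sq : K -> K) (i x : K) : Prop := R i th -> exists g, x = Psi (sq i, g).

Definition GP (th : K) (sq : K -> K) (a : K) : Prop :=
  exists e : seg R th -> K, otp_iso R th (C a) e /\
          forall i j : seg R th,
            R (proj1_sig i) (proj1_sig j) ->
            (forall k, ~ (R (proj1_sig i) k /\ R k (proj1_sig j))) ->
            Aof th sq (proj1_sig i) (e j) /\
            exists b, (fun _ : K => True) b /\ R (e i) b /\ R b (e j).

Definition Gs (th : K) (sq : K -> K) : K := epsilon (inhabits lam) (GP th sq).

Lemma Gs_spec th sq : R th lam -> is_limit R th -> GP th sq (Gs th sq).
Proof.
  intros H1 H2. unfold Gs. apply epsilon_spec.
  apply (HG (Aof th sq)); auto.
  - intros i _ x. exists (Psi (sq i, x)). split; auto. intros _. exists x; auto.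
  - split.
    + intros x. exists x. split; auto. right; auto.
    + auto.
Qed.

Lemma Gs_inj th sq sq' : R th lam -> is_limit R th -> Gs th sq = Gs th sq' ->
  forall i, R i th -> sq i = sq' i.
Proof.
  intros H1 H2 E i Hi.
  destruct (Gs_spec th sq H1 H2) as [e [He Hg]].
  destruct (Gs_spec th sq' H1 H2) as [e' [He' Hg']].
  rewrite E in He.
  destruct (succ_in th i H2 Hi) as [j [Hij [Hj Hn]]].
  set (ii := exist (fun x => R x th) i Hi). set (jj := exist (fun x => R x th) j Hj).
  destruct (Hg ii jj Hij Hn) as [A1 _]. destruct (Hg' ii jj Hij Hn) as [A2 _].
  destruct (A1 Hi) as [g Eg]. destruct (A2 Hi) as [g' Eg'].
  rewrite (iso_uniq th _ e e' He He' jj) in Eg. rewrite Eg in Eg'.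
  apply HP2 in Eg'. injection Eg'; auto.
Qed.

Definition Xk (X : seg R lam -> bool) (j : K) : bool :=
  match excluded_middle_informative (R j lam) with
  | left h => X (exist _ j h) | right _ => false end.

Definition Th (c : K) : K := epsilon (inhabits lam) (fun th => is_limit R th /\ R c th /\ R th lam).

Lemma Th_spec c : R c lam -> is_limit R (Th c) /\ R c (Th c) /\ R (Th c) lam.
Proof.
  intros Hc. unfold Th. apply epsilon_spec.
  destruct (lim_cof R WO lam Hsc Hlim Hcard Hsing (s c)) as [th [H1 [H2 H3]]].
  - apply (sc_lt_lim R WO); auto.
  - exists th. split; auto. split; auto. apply (R_le_trans R WO c (s c) th); [apply (sc_gt R WO lam Hsc Hlim)|exact H2].
Qed.

Definition bitK (b : bool) : K := if b then s Z else Z.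

Lemma bitK_inj b b' : bitK b = bitK b' -> b = b'.
Proof.
  assert (H : s Z <> Z).
  { intros E. apply (irr R WO Z). rewrite <- E at 2. apply (sc_gt R WO lam Hsc Hlim). }
  destruct b, b'; simpl; auto; intros E; exfalso; auto.
Qed.

Definition code (c : K) (X : seg R lam -> bool) : K :=
  Gs (Th c) (fun j => if excluded_middle_informative (le R j c) then bitK (Xk X j) else Z).

Lemma code_inj c X X' : R c lam -> code c X = code c X' -> forall j, le R j c -> Xk X j = Xk X' j.
Proof.
  intros Hc E j Hj. destruct (Th_spec c Hc) as [T1 [T2 T3]].
  pose proof (Gs_inj _ _ _ T3 T1 E j (le_R_trans R WO _ _ _ Hj T2)) as H. simpl in H.
  destruct (excluded_middle_informative (le R j c)); [|tauto]. apply bitK_inj; auto.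
Qed.

Lemma Code_exists : exists h : (seg R lam -> bool) -> K, forall X Y, h X = h Y -> X = Y.
Proof.
  destruct Hsing as [_ [_ [mu [Hmu [f Hf]]]]].
  destruct (lim_cof R WO lam Hsc Hlim Hcard Hsing mu Hmu) as [th0 [T1 [T2 T3]]].
  set (F := fun i => match excluded_middle_informative (R i mu) with
                     | left h => proj1_sig (f (exist _ i h)) | right _ => Z end).
  exists (fun X => Gs th0 (fun i => code (F i) X)).
  intros X Y E. apply functional_extensionality. intros [y hy].
  destruct (Hf y hy) as [[i hi] Hle]. simpl in Hle.
  assert (Hith : R i th0) by (eapply (R_le_trans R WO); eauto).
  pose proof (Gs_inj _ _ _ T3 T1 E i Hith) as Hc. simpl in Hc.
  assert (EF : F i = proj1_sig (f (exist _ i hi))).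
  { unfold F. destruct (excluded_middle_informative (R i mu)) as [h|h]; [|tauto].
    do 3 f_equal. apply proof_irrelevance. }
  rewrite EF in Hc.
  pose proof (code_inj _ X Y (proj2_sig (f (exist _ i hi))) Hc y Hle) as H.
  unfold Xk in H. destruct (excluded_middle_informative (R y lam)) as [h|h]; [|tauto].
  replace hy with h by apply proof_irrelevance. auto.
Qed.

End Guess.

Theorem proposition3p4 (K : Type) (R : K -> K -> Prop) (lam : K) :
  strict_wellorder R ->
  is_successor_cardinal_of R lam ->
  singular_cardinal R lam ->
  clubsuit_square R lam ->
  exists f : (seg R lam -> bool) -> K,
    (forall u v, f u = f v -> u = v) /\ (forall y, exists u, f u = y).
Proof.
  intros WO Hsc Hsing Hcs.
  pose proof Hsing as [Hlim [Hcard _]].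
  destruct Hcs as [C [_ HG]].
  destruct (psi_exists R WO lam Hsc Hlim Hsing) as [Psi [HP1 HP2]].
  destruct (Code_exists R WO lam Hsc Hlim Hcard Hsing C HG Psi HP1 HP2) as [h Hh].
  apply (bij_from_inj R WO lam Hsc h Hh).
Qed.
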